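(* (Crossing lemma) Let $G=(U,V,E)$ be a path-restricted ordered bipartite graph. Let $U=U_1\cup U_2$ and $V=V_1\cup V_2$ be partitions such that every vertex of $U_1$ has higher order than every vertex of $U_2$ and every vertex of $V_1$ has higher order than every vertex of $V_2$. (1) If every vertex of $U_1$ has a neighbour in $V_1$, then the number of edges between $U_1$ and $V_2$ is at most $|U_1|+|V_2|$. (2) If every vertex of $V_1$ has a neighbour in $U_1$, then the number of edges between $V_1$ and $U_2$ is at most $|V_1|+|U_2|$.
   Context: An ordered bipartite graph is $G=(U,V,E)$ where $U,V$ are disjoint finite sets, each carrying a strict total order (both written $<$), and $E\subseteq U\times V$. A path is a sequence of edges in which consecutive edges share a vertex. A path visiting the vertices of $U$ in the order $u_1,\dots,u_k$ and those of $V$ in the order $v_1,\dots,v_l$ is a forward path if either $u_1<\dots<u_k$ and $v_1<\dots<v_l$, or $u_1>\dots>u_k$ and $v_1>\dots>v_l$. For $x\le y$ in $U$ write $\langle x,y\rangle=\{u\in U: x\le u\le y\}$, and similarly in $V$. If $u_a<u_b$ are the smallest and largest $U$-vertices and $v_c<v_d$ the smallest and largest $V$-vertices of a forward path $P$, the range of $P$ is $\{\langle u_a,u_b\rangle,\langle v_c,v_d\rangle\}$. A vertex of $P$ is non-terminal if it is adjacent along $P$ to two vertices of $P$. An edge is a back edge to $P$ if either it is $(u_a,v_j)$ with $v_j\in\langle v_c,v_d\rangle$ and $v_j>v'$ for some non-terminal vertex $v'\in V$ of $P$, or it is $(u_i,v_c)$ with $u_i\in\langle u_a,u_b\rangle$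 and $u_i>u'$ for some non-terminal vertex $u'\in U$ of $P$. $G$ is a path-restricted ordered bipartite graph (PRBG) if no forward path in $G$ has a back edge in $E$. (In the paper's drawings vertices are placed from right to left in increasing order, so $U_1,V_1$ lie to the left and $U_2,V_2$ to the right of a separating line.) *)

(* Defs.v *)
From mathcomp Require Import all_boot.
Set Warnings "-notation-overridden".
Set Implicit Arguments. Unset Strict Implicit. Unset Printing Implicit Defensive.

(* An ordered bipartite graph: U = 'I_m, V = 'I_n with their natural orders
   (every finite totally ordered set is order-isomorphic to an ordinal),
   E : {set 'I_m * 'I_n}. *)

Section OBG.
Variables (m n : nat).
Definition vtx := ('I_m + 'I_n)%type.

Definition adj (E : {set 'I_m * 'I_n}) (x y : vtx) : bool :=
  match x, y with
  | inl u, inr v => (u, v) \in E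
  | inr v, inl u => (u, v) \in E
  | _, _ => false
  end.

Definition is_gpath (E : {set 'I_m * 'I_n}) (p : seq vtx) : bool :=
  if p is x :: s then (s != [::]) && path (adj E) x s else false.

Definition uvs (p : seq vtx) : seq 'I_m :=
  pmap (fun x : vtx => if x is inl u then Some u else None) p.
Definition vvs (p : seq vtx) : seq 'I_n :=
  pmap (fun x : vtx => if x is inr v then Some v else None) p.

Definition forward_path (E : {set 'I_m * 'I_n}) (p : seq vtx) : bool :=
  is_gpath E p &&
  ((sorted (fun a b : 'I_m => a < b) (uvs p) && sorted (fun a b : 'I_n => a < b) (vvs p))
   || (sorted (fun a b : 'I_m => a > b) (uvs p) && sorted (fun a b : 'I_n => a > b) (vvs p))).

(* non-terminal vertices: those adjacent along p to two vertices of p,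
   i.e. x_1, ..., x_{L-1} *)
Definition nonterminal (p : seq vtx) : seq vtx := drop 1 (take (size p).-1 p).

Definition is_min_in {k} (s : seq 'I_k) (x : 'I_k) : Prop :=
  x \in s /\ forall y, y \in s -> x <= y.
Definition is_max_in {k} (s : seq 'I_k) (x : 'I_k) : Prop :=
  x \in s /\ forall y, y \in s -> y <= x.

Definition back_edge (p : seq vtx) (u : 'I_m) (v : 'I_n) : Prop :=
  (exists ua vc vd, is_min_in (uvs p) ua /\ is_min_in (vvs p) vc /\ is_max_in (vvs p) vd /\
     u = ua /\ (vc <= v <= vd) /\
     (exists v' : 'I_n, (inr v' : vtx) \in nonterminal p /\ v' < v))
  \/
  (exists ua ub vc, is_min_in (uvs p) ua /\ is_max_in (uvs p) ub /\ is_min_in (vvs p) vc /\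
     v = vc /\ (ua <= u <= ub) /\
     (exists u' : 'I_m, (inl u' : vtx) \in nonterminal p /\ u' < u)).

Definition PRBG (E : {set 'I_m * 'I_n}) : Prop :=
  forall p : seq vtx, forward_path E p ->
  forall u v, (u, v) \in E -> ~ back_edge p u v.
End OBG.

(* Main.v *)
Require Import Defs.
From mathcomp Require Import all_boot.

Lemma gen a b (S : {set 'I_a * 'I_b}) (X : {set 'I_a}) (Y : {set 'I_b}) :
  (forall e, e \in S -> (e.1 \in X) && (e.2 \in Y)) ->
  (forall x y1 y2 x1 x2, (x,y1) \in S -> (x,y2) \in S -> (x1,y1) \in S ->
      (x2,y2) \in S -> x < x1 -> x < x2 -> y1 = y2) ->
  #|S| <= #|X| + #|Y|.
Proof.
move=> HS H.
pose f (e : 'I_a * 'I_b) : ('I_a + 'I_b)%type :=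
  if [exists x1, ((x1, e.2) \in S) && (e.1 < x1)] then inl e.1 else inr e.2.
have inj : {in S &, injective f}.
  move=> [x y] [x' y'] He He'; rewrite /f /=.
  case: ifP => h1; case: ifP => h2 // [].
  - move=> exx; subst x'.
    move/existsP: h1 => [x1 /andP[H1 L1]]; move/existsP: h2 => [x2 /andP [H2 L2]].
    by rewrite (H _ _ _ _ _ He He' H1 H2 L1 L2).
  - move=> eyy; subst y'.
    have := negbT h1; rewrite negb_exists => /forallP /(_ x'); rewrite He' /= => n1.
    have := negbT h2; rewrite negb_exists => /forallP /(_ x); rewrite He /= => n2.
    have exx : x = x'.
      by apply/val_inj/eqP; rewrite eqn_leq leqNgt n2 leqNgt n1.
    by rewrite exx.
rewrite -(card_in_imset inj).
have sub : f @: S \subset (inl @: X) :|: (inr @: Y).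
  apply/subsetP => z /imsetP [e He ->]; rewrite /f.
  case/andP: (HS e He) => h1 h2.
  case: ifP => _; rewrite inE; apply/orP; [left|right]; exact: imset_f.
apply: (leq_trans (subset_leq_card sub)).
apply: (leq_trans (leq_card_setU (inl @: X) (inr @: Y)).1).
by rewrite !card_imset //; [exact: inr_inj | exact: inl_inj].
Qed.

Lemma key m n (E : {set 'I_m * 'I_n}) (x x1: 'I_m) (y1 y2 w : 'I_n) :
  PRBG E -> (x,y1) \in E -> (x1,y1) \in E -> (x1,w) \in E -> (x,y2) \in E ->
  x < x1 -> y1 < y2 -> y2 <= w -> False.
Proof.
move=> H e1 e2 e3 e4 l1 l2 l3.
have fp : forward_path E [:: inl x; inr y1; inl x1; inr w].
  by rewrite /forward_path /is_gpath /= e1 e2 e3 l1 (leq_trans l2 l3).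
apply: (H _ fp x y2 e4); left; exists x, y1, w; rewrite /uvs /vvs /=.
split; first by split; [rewrite inE eqxx | move=> z; rewrite !inE => /orP[/eqP->|/eqP->] //; apply: ltnW].
split; first by split; [rewrite inE eqxx | move=> z; rewrite !inE => /orP[/eqP->|/eqP->] //; apply: ltnW; exact: (leq_trans l2 l3)].
split; first by split; [rewrite !inE eqxx orbT | move=> z; rewrite !inE => /orP[/eqP->|/eqP->] //; apply: ltnW; exact: (leq_trans l2 l3)].
split; first by [].
split; first by rewrite (ltnW l2) l3.
by exists y1; split; [rewrite /nonterminal /= !inE eqxx | ].
Qed.

Lemma key2 m n (E : {set 'I_m * 'I_n}) (y y1: 'I_n) (x1 x2 w : 'I_m) :
  PRBG E -> (x1,y) \in E -> (x1,y1) \in E -> (w,y1) \in E -> (x2,y) \in E ->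
  y < y1 -> x1 < x2 -> x2 <= w -> False.
Proof.
move=> H e1 e2 e3 e4 l1 l2 l3.
have fp : forward_path E [:: inr y; inl x1; inr y1; inl w].
  by rewrite /forward_path /is_gpath /= e1 e2 e3 l1 (leq_trans l2 l3).
apply: (H _ fp x2 y e4); right; exists x1, w, y; rewrite /uvs /vvs /=.
split; first by split; [rewrite inE eqxx | move=> z; rewrite !inE => /orP[/eqP->|/eqP->] //; apply: ltnW; exact: (leq_trans l2 l3)].
split; first by split; [rewrite !inE eqxx orbT | move=> z; rewrite !inE => /orP[/eqP->|/eqP->] //; apply: ltnW; exact: (leq_trans l2 l3)].
split; first by split; [rewrite inE eqxx | move=> z; rewrite !inE => /orP[/eqP->|/eqP->] //; apply: ltnW].
split; first by [].
split; first by rewrite (ltnW l2) l3.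
by exists x1; split; [rewrite /nonterminal /= !inE eqxx | ].
Qed.

Theorem lemma7 (m n : nat) (E : {set 'I_m * 'I_n})
  (U1 U2 : {set 'I_m}) (V1 V2 : {set 'I_n}) :
  PRBG E ->
  U1 :|: U2 = setT -> U1 :&: U2 = set0 ->
  V1 :|: V2 = setT -> V1 :&: V2 = set0 ->
  (forall x y, x \in U1 -> y \in U2 -> y < x) ->
  (forall x y, x \in V1 -> y \in V2 -> y < x) ->
  ((forall u, u \in U1 -> exists2 v, v \in V1 & (u, v) \in E) ->
     #|[set e in E | (e.1 \in U1) && (e.2 \in V2)]| <= #|U1| + #|V2|)
  /\
  ((forall v, v \in V1 -> exists2 u, u \in U1 & (u, v) \in E) ->
     #|[set e in E | (e.2 \in V1) && (e.1 \in U2)]| <= #|V1| + #|U2|).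
Proof.
move=> H _ _ _ _ HU HV; split.
- move=> nb; apply: gen.
    by move=> e; rewrite inE => /andP[].
  move=> x y1 y2 x1 x2; rewrite !inE /=.
  move=> /andP[e1 /andP[xU y1V]] /andP[e2 /andP[_ y2V]] /andP[e3 /andP[x1U _]]
         /andP[e4 /andP[x2U _]] l1 l2.
  case: (ltngtP y1 y2) => [lt|lt|eq]; last exact: val_inj.
  + case: (nb _ x1U) => w wV ew; exfalso.
    exact: (key _ _ _ _ _ _ _ _ H e1 e3 ew e2 l1 lt (ltnW (HV _ _ wV y2V))).
  + case: (nb _ x2U) => w wV ew; exfalso.
    exact: (key _ _ _ _ _ _ _ _ H e2 e4 ew e1 l2 lt (ltnW (HV _ _ wV y1V))).
- move=> nb.
  set S2 := [set e in E | _].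
  pose T := [set e : 'I_n * 'I_m | (e.2, e.1) \in S2].
  have -> : #|S2| = #|T|.
    have -> : T = [set (e.2, e.1) | e in S2].
      apply/setP => -[v u]; rewrite inE /=; apply/idP/imsetP.
        by move=> h; exists (u, v).
      by move=> [[u' v'] h [-> ->]].
    rewrite card_imset // => -[a b] [c d] /= [-> ->] //.
  apply: gen.
    by move=> [v u]; rewrite !inE /= => /andP[_ /andP[-> ->]].
  move=> y x1 x2 y1 y2; rewrite !inE /=.
  move=> /andP[e1 /andP[yV x1U]] /andP[e2 /andP[_ x2U]] /andP[e3 /andP[y1V _]]
         /andP[e4 /andP[y2V _]] l1 l2.
  case: (ltngtP x1 x2) => [lt|lt|eq]; last exact: val_inj.
  + case: (nb _ y1V) => w wU ew; exfalso.
    exact: (key2 _ _ _ _ _ _ _ _ H e1 e3 ew e2 l1 lt (ltnW (HU _ _ wU x2U))).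
  + case: (nb _ y2V) => w wU ew; exfalso.
    exact: (key2 _ _ _ _ _ _ _ _ H e2 e4 ew e1 l2 lt (ltnW (HU _ _ wU x1U))).
Qed.
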